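(* Let $\epsilon_{\mathrm i},\epsilon_{\mathrm e},S_{\mathrm i},l_{\mathrm C}>0$; set $S=S_{\mathrm i},\epsilon=\epsilon_{\mathrm i}$ on $\xi<0$ and $S=1,\epsilon=\epsilon_{\mathrm e}$ on $\xi>0$. Suppose $\phi_-,\phi_+\in\mathbb R$ and $\tilde\phi:\mathbb R\to\mathbb R$ is continuous, $C^2$ on $(-\infty,0)$ and $(0,\infty)$ with one-sided derivatives at $0$, and satisfies $$\epsilon\,\tilde\phi''=2\sqrt S\,\sinh(\tilde\phi-\phi_\pm)\ \text{ on } \{\pm\xi>0\},\qquad \lim_{\xi\to\pm\infty}\tilde\phi(\xi)=\phi_\pm,\qquad \epsilon_{\mathrm i}\tilde\phi'(0^-)=\epsilon_{\mathrm e}\tilde\phi'(0^+),$$ and, with $\tilde q=-2\sqrt S\sinh(\tilde\phi-\phi_\pm)$ on $\{\pm\xi>0\}$, $$l_{\mathrm C}\Big(\tilde q+\sqrt{4+\tilde q^2}\Big)\Big|_{\xi=0^+}=\Big(\tilde q+\sqrt{4S_{\mathrm i}+\tilde q^2}\Big)\Big|_{\xi=0^-}.$$ Then $\phi^\Delta:=\phi_--\phi_+=\ln(l_{\mathrm C}/\sqrt{S_{\mathrm i}})$, and $$\tilde\phi(\xi)=\phi_\pm+2\ln\frac{1+A_\pm e^{\mp\lambda_\pm\xi}}{1-A_\pm e^{\mp\lambda_\pm\xi}}\quad(\pm\xi>0),$$ with $\lambda_+=\sqrt2\,\epsilon_{\mathrm e}^{-1/2}$, $\lambda_-=\sqrt2\,\epsilon_{\mathrm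 i}^{-1/2}S_{\mathrm i}^{1/4}$, $\rho=\sqrt{l_{\mathrm C}/\sqrt{S_{\mathrm i}}}$, $\zeta=\sqrt{\epsilon_{\mathrm e}/(\epsilon_{\mathrm i}\sqrt{S_{\mathrm i}})}$ and $$A_+=\frac{\sqrt{\rho(\rho+\zeta)}-\sqrt{1+\rho\zeta}}{\sqrt{\rho(\rho+\zeta)}+\sqrt{1+\rho\zeta}},\qquad A_-=\frac{\sqrt{\rho+\zeta}-\sqrt{\rho(1+\rho\zeta)}}{\sqrt{\rho+\zeta}+\sqrt{\rho(1+\rho\zeta)}}.$$ Furthermore, with $\phi^\Delta_{\mathrm i}=\tilde\phi(-\infty)-\tilde\phi(0)=-2\ln\frac{1+A_-}{1-A_-}$ and $\phi^\Delta_{\mathrm e}=\tilde\phi(0)-\tilde\phi(\infty)=2\ln\frac{1+A_+}{1-A_+}$: $\phi^\Delta_{\mathrm i}+\phi^\Delta_{\mathrm e}=\phi^\Delta$; $\phi^\Delta_{\mathrm i}$ and $\phi^\Delta_{\mathrm e}$ have the same sign; $\phi^\Delta_{\mathrm i}=\frac{\zeta}{1+\zeta}\phi^\Delta+O((\phi^\Delta)^2)$ and $\phi^\Delta_{\mathrm e}=\frac{1}{1+\zeta}\phi^\Delta+O((\phi^\Delta)^2)$; $$\int_{-\infty}^0\tilde q\,d\xi=-\int_0^\infty\tilde q\,d\xi=\big((\epsilon_{\mathrm i}\lambda_-)^{-1}+(\epsilon_{\mathrm e}\lambda_+)^{-1}\big)^{-1}\phi^\Delta+O((\phi^\Delta)^2);$$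 and $$\int_{-\infty}^{\infty}\epsilon\,(\tilde\phi')^2\,d\xi=\frac{8\lambda_+\epsilon_{\mathrm e}A_+^2}{1-A_+^2}+\frac{8\lambda_-\epsilon_{\mathrm i}A_-^2}{1-A_-^2}.$$
   Context: This describes the leading-order electric double layer at a liquid–liquid interface ($\xi<0$ interior, $\xi>0$ exterior) in the weak-electrolyte limit. Since $S_{\mathrm i}=l_{\mathrm C}l_{\mathrm A}$, one has $\phi^\Delta=\frac12\ln(l_{\mathrm C}/l_{\mathrm A})$ (the Galvani potential), where $l_{\mathrm C},l_{\mathrm A}$ are the cation and anion partition coefficients. *)

(* Defs.v *)
From Stdlib Require Import Reals Lra.
Open Scope R_scope.

Definition lim_pinf (f : R -> R) (l : R) : Prop :=
  forall eps, 0 < eps -> exists M, forall x, M < x -> Rabs (f x - l) < eps.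
Definition lim_minf (f : R -> R) (l : R) : Prop :=
  forall eps, 0 < eps -> exists M, forall x, x < M -> Rabs (f x - l) < eps.

Definition rderiv (f : R -> R) (x l : R) : Prop :=
  forall eps, 0 < eps -> exists del, 0 < del /\
    forall h, 0 < h < del -> Rabs ((f (x + h) - f x) / h - l) < eps.
Definition lderiv (f : R -> R) (x l : R) : Prop :=
  forall eps, 0 < eps -> exists del, 0 < del /\
    forall h, - del < h < 0 -> Rabs ((f (x + h) - f x) / h - l) < eps.

Definition is_RInt (f : R -> R) (a b I : R) : Prop :=
  exists pr : Riemann_integrable f a b, RiemannInt pr = I.

Definition improper_minf_0 (f : R -> R) (L : R) : Prop :=
  exists F : R -> R, (forall a, a < 0 -> is_RInt f a 0 (F a)) /\ lim_minf F L.
Definition improper_0_pinf (f : R -> R) (L : R) : Prop :=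
  exists F : R -> R, (forall b, 0 < b -> is_RInt f 0 b (F b)) /\ lim_pinf F L.

(* piecewise data: interior xi<0, exterior xi>0 (value at 0 taken from the + side;
   irrelevant for everything below) *)
Definition Sfun (S_i x : R) : R := if Rlt_dec x 0 then S_i else 1.
Definition epsfun (eps_i eps_e x : R) : R := if Rlt_dec x 0 then eps_i else eps_e.
Definition phipm (phim phip x : R) : R := if Rlt_dec x 0 then phim else phip.

Definition qt (S_i phim phip : R) (phit : R -> R) (x : R) : R :=
  - 2 * sqrt (Sfun S_i x) * sinh (phit x - phipm phim phip x).

Definition IsSolution (eps_i eps_e S_i l_C phim phip : R)
    (phit d1 d2 : R -> R) : Prop :=
  (forall x, continuity_pt phit x) /\
  (forall x, x <> 0 ->
     derivable_pt_lim phit x (d1 x) /\ derivable_pt_lim d1 x (d2 x) /\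
     continuity_pt d2 x) /\
  (forall x, x <> 0 ->
     epsfun eps_i eps_e x * d2 x
       = 2 * sqrt (Sfun S_i x) * sinh (phit x - phipm phim phip x)) /\
  lim_minf phit phim /\ lim_pinf phit phip /\
  (exists Dm Dp, lderiv phit 0 Dm /\ rderiv phit 0 Dp /\ eps_i * Dm = eps_e * Dp) /\
  (let qp := - 2 * sinh (phit 0 - phip) in
   let qm := - 2 * sqrt S_i * sinh (phit 0 - phim) in
   l_C * (qp + sqrt (4 + qp ^ 2)) = qm + sqrt (4 * S_i + qm ^ 2)).

Definition lam_p (eps_e : R) : R := sqrt 2 / sqrt eps_e.
Definition lam_m (eps_i S_i : R) : R := sqrt 2 / sqrt eps_i * sqrt (sqrt S_i).
Definition rho (S_i l_C : R) : R := sqrt (l_C / sqrt S_i).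
Definition zeta (eps_i eps_e S_i : R) : R := sqrt (eps_e / (eps_i * sqrt S_i)).
Definition A_p (r z : R) : R :=
  (sqrt (r * (r + z)) - sqrt (1 + r * z)) / (sqrt (r * (r + z)) + sqrt (1 + r * z)).
Definition A_m (r z : R) : R :=
  (sqrt (r + z) - sqrt (r * (1 + r * z))) / (sqrt (r + z) + sqrt (r * (1 + r * z))).

(* Main.v *)
Require Import Defs.
From Stdlib Require Import Reals.
Open Scope R_scope.
From Stdlib Require Import Lra.
From Coquelicot Require Import Coquelicot.
Open Scope R_scope.


Lemma const_pos (F F' : R -> R) :
  (forall x, 0 < x -> derivable_pt_lim F x (F' x)) ->
  (forall x, 0 < x -> F' x = 0) -> forall x y, 0 < x -> 0 < y -> F x = F y.
Proof.
  intros HD H0.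
  assert (K : forall x y, 0 < x -> x < y -> F x = F y).
  { intros x y Hx Hxy.
    destruct (MVT_cor2 F F' x y Hxy) as [c [Hc1 Hc2]].
    { intros c Hc. apply HD. lra. }
    rewrite H0 in Hc1 by lra. lra. }
  intros x y Hx Hy.
  destruct (Rtotal_order x y) as [H|[H|H]].
  - apply K; auto.
  - subst; auto.
  - symmetry; apply K; auto.
Qed.

Lemma lim_pinf_comp (f phi : R -> R) l :
  (forall eps, 0 < eps -> exists M, forall x, M < x -> Rabs (f x - l) < eps) ->
  continuity_pt phi l ->
  forall eps, 0 < eps -> exists M, forall x, M < x -> Rabs (phi (f x) - phi l) < eps.
Proof.
  intros Hf Hc eps Heps.
  destruct (Hc eps Heps) as [alp [Halp H]].
  destruct (Hf alp Halp) as [M HM].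
  exists M. intros x Hx.
  destruct (Req_dec (f x) l) as [E|E].
  - rewrite E. unfold Rminus. rewrite Rplus_opp_r, Rabs_R0. exact Heps.
  - apply (H (f x)). split. split; [exact I| auto]. apply HM; auto.
Qed.

Definition phi0 (y : R) := exp y + exp (- y) - 2.

Lemma phi0_ge0 y : 0 <= phi0 y.
Proof.
  unfold phi0. rewrite exp_Ropp.
  assert (H := exp_pos y). set (E := exp y) in *.
  assert (E + / E - 2 = (E - 1)^2 / E) by (field; lra).
  rewrite H0. apply Rdiv_le_0_compat; [apply pow2_ge_0|lra].
Qed.

Lemma phi0_cont y : continuity_pt phi0 y.
Proof.
  unfold phi0. apply derivable_continuous_pt.
  apply ex_derive_Reals_0. auto_derive. auto.
Qed.

Definition lim_pinf' (f : R -> R) (l : R) : Prop :=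
  forall eps, 0 < eps -> exists M, forall x, M < x -> Rabs (f x - l) < eps.

Ltac exd := repeat split; try (eexists; eassumption).

Lemma energy_zero k (f g h : R -> R) : 0 < k ->
  (forall x, 0 < x -> derivable_pt_lim f x (g x)) ->
  (forall x, 0 < x -> derivable_pt_lim g x (h x)) ->
  (forall x, 0 < x -> h x = k^2 * sinh (f x)) ->
  lim_pinf' f 0 ->
  forall x, 0 < x -> g x ^ 2 = k^2 * phi0 (f x).
Proof.
  intros Hk Hf Hg Hh Hl.
  set (En := fun y => g y ^ 2 - k^2 * phi0 (f y)).
  assert (Hc : forall x, 0 < x -> En x = En 1).
  { intros x Hx. apply (const_pos En (fun _ => 0)); [|auto|auto|lra].
    intros y Hy.
    assert (E : 0 = 2 * g y * h y - k^2 * (exp (f y) - exp (- f y)) * g y).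
    { rewrite Hh by auto. unfold sinh. field. }
    rewrite E. apply is_derive_Reals.
    assert (H1 := proj2 (is_derive_Reals _ _ _) (Hf y Hy)).
    assert (H2 := proj2 (is_derive_Reals _ _ _) (Hg y Hy)).
    unfold En, phi0. auto_derive. exd.
    replace (Derive (fun x0 => f x0) y) with (g y) by (symmetry; apply is_derive_unique; auto).
    replace (Derive (fun x0 => g x0) y) with (h y) by (symmetry; apply is_derive_unique; auto).
    ring. }
  set (c := En 1) in *.
  assert (Hp0 : phi0 0 = 0) by (unfold phi0; rewrite Ropp_0, exp_0; ring).
  destruct (Rtotal_order c 0) as [Hneg|[Hz|Hpos]].
  - exfalso.
    destruct (lim_pinf_comp f phi0 0 Hl (phi0_cont 0) (- c / k^2)) as [M HM].
    { apply Rdiv_lt_0_compat; [lra| nra]. }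
    set (x := Rmax M 0 + 1).
    assert (HxM : M < x) by (unfold x; assert (H:=Rmax_l M 0); lra).
    assert (Hx0 : 0 < x) by (unfold x; assert (H:=Rmax_r M 0); lra).
    specialize (HM x HxM). rewrite Hp0, Rminus_0_r in HM.
    assert (H1 := Hc x Hx0). unfold En in H1.
    assert (H2 := phi0_ge0 (f x)).
    rewrite Rabs_right in HM by lra.
    apply Rmult_lt_compat_l with (r := k^2) in HM; [|nra].
    replace (k^2 * (-c / k^2)) with (-c) in HM by (field; lra).
    assert (0 <= g x ^ 2) by apply pow2_ge_0. lra.
  - intros x Hx. assert (H1 := Hc x Hx). unfold En in H1. lra.
  - exfalso.
    destruct (Hl 1 Rlt_0_1) as [M HM].
    set (x := Rmax M 0 + 1).
    assert (HxM : M < x) by (unfold x; assert (H:=Rmax_l M 0); lra).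
    assert (Hx0 : 0 < x) by (unfold x; assert (H:=Rmax_r M 0); lra).
    set (y := x + 3 / sqrt c).
    assert (Hsc : 0 < sqrt c) by (apply sqrt_lt_R0; auto).
    assert (Hy : x < y) by (unfold y; assert (0 < 3 / sqrt c) by (apply Rdiv_lt_0_compat; lra); lra).
    destruct (MVT_cor2 f g x y Hy) as [xi [Hxi1 Hxi2]].
    { intros t Ht. apply Hf. lra. }
    assert (A1 := HM x HxM). assert (A2 := HM y ltac:(lra)).
    rewrite Rminus_0_r in A1, A2.
    assert (Hg2 : c <= g xi ^ 2).
    { assert (H1 := Hc xi ltac:(lra)). unfold En in H1.
      assert (H2 := phi0_ge0 (f xi)). nra. }
    assert (Hd : y - x = 3 / sqrt c) by (unfold y; ring).
    rewrite Hd in Hxi1.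
    assert (Hsq : (f y - f x)^2 = g xi ^2 * 9 / c).
    { rewrite Hxi1. replace c with (sqrt c * sqrt c) at 2 by (apply sqrt_sqrt; lra).
      field. lra. }
    assert (g xi ^ 2 * 9 / c >= 9).
    { apply Rle_ge. apply Rmult_le_reg_r with c; auto.
      replace (g xi ^ 2 * 9 / c * c) with (g xi ^2 * 9) by (field; lra). nra. }
    apply Rabs_def2 in A1. apply Rabs_def2 in A2.
    assert ((f y - f x)^2 < 4) by nra. lra.
Qed.

Lemma lin_ode k (w w1 : R -> R) : 0 < k ->
  (forall x, 0 < x -> derivable_pt_lim w x (w1 x)) ->
  (forall x, 0 < x -> derivable_pt_lim w1 x (k^2 * w x)) ->
  (forall x, 0 < x -> Rabs (w x) <= 1) ->
  exists A, forall x, 0 < x -> w x = A * exp (- k * x) /\ w1 x = - k * w x.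
Proof.
  intros Hk Hw Hw1 Hb.
  assert (HP : forall x, 0 < x -> (w1 x + k * w x) * exp (- k * x) = (w1 1 + k * w 1) * exp (- k * 1)).
  { intros x Hx. apply (const_pos (fun y => (w1 y + k * w y) * exp (- k * y)) (fun _ => 0)); auto; try lra.
    intros y Hy. apply is_derive_Reals.
    assert (H1 := proj2 (is_derive_Reals _ _ _) (Hw y Hy)).
    assert (H2 := proj2 (is_derive_Reals _ _ _) (Hw1 y Hy)).
    auto_derive. exd.
    replace (Derive (fun x0 => w x0) y) with (w1 y) by (symmetry; apply is_derive_unique; auto).
    replace (Derive (fun x0 => w1 x0) y) with (k^2 * w y) by (symmetry; apply is_derive_unique; auto).
    ring. }
  assert (HQ : forall x, 0 < x -> (w1 x - k * w x) * exp (k * x) = (w1 1 - k * w 1) * exp (k * 1)).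
  { intros x Hx. apply (const_pos (fun y => (w1 y - k * w y) * exp (k * y)) (fun _ => 0)); auto; try lra.
    intros y Hy. apply is_derive_Reals.
    assert (H1 := proj2 (is_derive_Reals _ _ _) (Hw y Hy)).
    assert (H2 := proj2 (is_derive_Reals _ _ _) (Hw1 y Hy)).
    auto_derive. exd.
    replace (Derive (fun x0 => w x0) y) with (w1 y) by (symmetry; apply is_derive_unique; auto).
    replace (Derive (fun x0 => w1 x0) y) with (k^2 * w y) by (symmetry; apply is_derive_unique; auto).
    ring. }
  set (C := (w1 1 + k * w 1) * exp (- k * 1)) in *.
  set (D := (w1 1 - k * w 1) * exp (k * 1)) in *.
  assert (Hee : forall x, exp (k * x) * exp (- k * x) = 1).
  { intros x. rewrite <- exp_plus. replace (k * x + - k * x) with 0 by ring. apply exp_0. }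
  assert (HP' : forall x, 0 < x -> w1 x + k * w x = C * exp (k * x)).
  { intros x Hx. rewrite <- (HP x Hx). rewrite Rmult_assoc, (Rmult_comm (exp _)), Hee. ring. }
  assert (HQ' : forall x, 0 < x -> w1 x - k * w x = D * exp (- k * x)).
  { intros x Hx. rewrite <- (HQ x Hx). rewrite Rmult_assoc, Hee. ring. }
  assert (HC : C = 0).
  { destruct (Req_dec C 0) as [|HC]; auto. exfalso.
    assert (HaC : 0 < Rabs C) by (apply Rabs_pos_lt; auto).
    set (x := (2 * k + Rabs D) / (k * Rabs C) + 1).
    assert (Hx0 : 0 < x).
    { unfold x. assert (0 <= (2 * k + Rabs D) / (k * Rabs C)); [|lra].
      apply Rdiv_le_0_compat; [assert (H:=Rabs_pos D); lra| nra]. }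
    assert (E2 : 2 * k * w x = C * exp (k * x) - D * exp (- k * x)).
    { rewrite <- HP', <- HQ' by auto. ring. }
    assert (Hex := exp_ineq1_le (k * x)).
    assert (Hep := exp_pos (k * x)). assert (Hem := exp_pos (- k * x)).
    assert (Hem1 : exp (- k * x) <= 1) by (specialize (Hee x); nra).
    assert (Hbound : Rabs C * exp (k * x) <= 2 * k + Rabs D).
    { replace (Rabs C * exp (k * x)) with (Rabs (2 * k * w x + D * exp (- k * x))).
      2:{ rewrite E2. replace (C * exp (k * x) - D * exp (- k * x) + D * exp (- k * x)) with (C * exp (k * x)) by ring.
          rewrite Rabs_mult, (Rabs_right (exp _)); lra. }
      eapply Rle_trans; [apply Rabs_triang|].
      rewrite !Rabs_mult, (Rabs_right (exp _)) by lra.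
      try rewrite (Rabs_right (2 * k)) by lra; try rewrite (Rabs_right 2) by lra; try rewrite (Rabs_right k) by lra.
      assert (H1 := Hb x Hx0). assert (H2 := Rabs_pos D). assert (H3 := Rabs_pos (w x)). nra. }
    assert (Hkx : k * x = (2 * k + Rabs D) / Rabs C + k) by (unfold x; field; lra).
    assert (Hge : Rabs C * exp (k * x) >= Rabs C * (1 + k * x)) by nra.
    assert (Hr : Rabs C * (1 + k * x) = Rabs C + 2 * k + Rabs D + k * Rabs C) by (rewrite Hkx; field; lra).
    assert (0 < k * Rabs C) by (apply Rmult_lt_0_compat; lra). lra. }
  exists (- D / (2 * k)). intros x Hx.
  assert (H1 := HP' x Hx). assert (H2 := HQ' x Hx). rewrite HC in H1.
  split.
  - apply Rmult_eq_reg_l with (2 * k); [|lra].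
    replace (2 * k * w x) with ((w1 x + k * w x) - (w1 x - k * w x)) by ring.
    rewrite H1, H2. field. lra.
  - lra.
Qed.

Definition wof (y : R) := (exp (y / 2) - 1) / (exp (y / 2) + 1).

Lemma wof_bound y : Rabs (wof y) < 1.
Proof.
  unfold wof. assert (H := exp_pos (y/2)).
  apply Rabs_def1.
  - apply Rmult_lt_reg_r with (exp (y/2) + 1); [lra|]. unfold Rdiv. rewrite Rmult_assoc, Rinv_l by lra. lra.
  - apply Rmult_lt_reg_r with (exp (y/2) + 1); [lra|]. unfold Rdiv. rewrite Rmult_assoc, Rinv_l by lra. lra.
Qed.

Lemma half_line k (f g h : R -> R) : 0 < k ->
  (forall x, 0 < x -> derivable_pt_lim f x (g x)) ->
  (forall x, 0 < x -> derivable_pt_lim g x (h x)) ->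
  (forall x, 0 < x -> h x = k^2 * sinh (f x)) ->
  lim_pinf' f 0 ->
  exists A, forall x, 0 < x -> wof (f x) = A * exp (- k * x) /\
     g x = - k * (exp (f x / 2) - / exp (f x / 2)).
Proof.
  intros Hk Hf Hg Hh Hl.
  assert (Hen := energy_zero k f g h Hk Hf Hg Hh Hl).
  set (W1 := fun x => exp (f x / 2) * g x / (exp (f x / 2) + 1)^2).
  destruct (lin_ode k (fun x => wof (f x)) W1 Hk) as [A HA].
  - intros x Hx. apply is_derive_Reals.
    assert (H1 := proj2 (is_derive_Reals _ _ _) (Hf x Hx)).
    unfold wof, W1. auto_derive.
    + exd. assert (H := exp_pos (f x / 2)). lra.
    + replace (Derive (fun x0 => f x0) x) with (g x) by (symmetry; apply is_derive_unique; auto).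
      assert (H := exp_pos (f x / 2)). unfold Rdiv in *. set (E := exp (f x * / 2)) in *. field. lra.
  - intros x Hx. apply is_derive_Reals.
    assert (H1 := proj2 (is_derive_Reals _ _ _) (Hf x Hx)).
    assert (H2 := proj2 (is_derive_Reals _ _ _) (Hg x Hx)).
    unfold wof, W1. auto_derive.
    + exd. assert (H := exp_pos (f x * / 2)). apply Rgt_not_eq. apply Rlt_gt. nra.
    + replace (Derive (fun x0 => f x0) x) with (g x) by (symmetry; apply is_derive_unique; auto).
      replace (Derive (fun x0 => g x0) x) with (h x) by (symmetry; apply is_derive_unique; auto).
      rewrite Hh by auto.
      assert (Hg2 := Hen x Hx). unfold phi0 in Hg2. unfold sinh.
      unfold Rdiv in *.
      assert (HE := exp_pos (f x * / 2)).
      assert (Ef : exp (f x) = exp (f x * / 2) * exp (f x * / 2)) by (rewrite <- exp_plus; f_equal; field).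
      assert (Emf : exp (- f x) = / (exp (f x * / 2) * exp (f x * / 2))) by (rewrite <- Ef; apply exp_Ropp).
      rewrite Ef, Emf in *. set (E := exp (f x * / 2)) in *.
      set (G := g x) in *.
      assert (Hz : G^2 - k^2*(E*E + /(E*E) - 2) = 0) by lra.
      apply Rminus_diag_uniq.
      transitivity (E*(1-E)/(2*(E+1)^3) * (G^2 - k^2*(E*E+/(E*E)-2))).
      { field. lra. }
      rewrite Hz. ring.
  - intros x Hx. left. apply wof_bound.
  - exists A. intros x Hx. destruct (HA x Hx) as [H1 H2]. split; auto.
    unfold W1, wof in H2. assert (HE := exp_pos (f x / 2)).
    set (E := exp (f x / 2)) in *.
    replace (g x) with ((E * g x / (E + 1)^2) * (E + 1)^2 / E) by (field; lra).
    rewrite H2. field. lra.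
Qed.

Lemma cont_zero (F : R -> R) : continuity_pt F 0 -> (forall x, 0 < x -> F x = 0) -> F 0 = 0.
Proof.
  intros Hc H. destruct (Req_dec (F 0) 0) as [|Hn]; auto. exfalso.
  assert (Hp : 0 < Rabs (F 0)) by (apply Rabs_pos_lt; auto).
  destruct (Hc _ Hp) as [alp [Halp Hx]].
  assert (Hd := Hx (alp / 2)). simpl in Hd. unfold R_dist in Hd.
  rewrite H in Hd by lra. rewrite Rminus_0_l, Rabs_Ropp, Rminus_0_r in Hd.
  assert (Rabs (F 0) < Rabs (F 0)); [|lra].
  apply Hd. split. split; [exact I|lra]. rewrite Rabs_right; lra.
Qed.

Lemma wof_cont y : continuity_pt wof y.
Proof.
  apply derivable_continuous_pt. apply ex_derive_Reals_0. unfold wof. auto_derive.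
  assert (H := exp_pos (y * / 2)). lra.
Qed.

Lemma A_at_0 k A (f : R -> R) : continuity_pt f 0 ->
  (forall x, 0 < x -> wof (f x) = A * exp (- k * x)) -> A = wof (f 0).
Proof.
  intros Hc H.
  set (F := fun x => wof (f x) - A * exp (- k * x)).
  assert (HF : F 0 = 0).
  { apply cont_zero.
    - unfold F. apply continuity_pt_minus.
      + apply (continuity_pt_comp f wof). auto. apply wof_cont.
      + apply derivable_continuous_pt. apply ex_derive_Reals_0. auto_derive. auto.
    - intros x Hx. unfold F. rewrite H by auto. ring. }
  unfold F in HF. rewrite Rmult_0_r, exp_0 in HF. lra.
Qed.

Lemma wof_E y : (1 + wof y) / (1 - wof y) = exp (y / 2).
Proof. unfold wof. assert (H := exp_pos (y/2)). field. lra. Qed.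

Lemma wof_log y : y = 2 * ln ((1 + wof y) / (1 - wof y)).
Proof. rewrite wof_E, ln_exp. field. Qed.

Lemma rderiv_unique (f Phi : R -> R) D l :
  rderiv f 0 D -> (forall x, 0 <= x -> f x = Phi x) -> derivable_pt_lim Phi 0 l -> D = l.
Proof.
  intros Hr He Hd.
  apply Rminus_diag_uniq. apply Rabs_eq_0.
  apply Rle_antisym; [|apply Rabs_pos].
  apply Rnot_lt_le. intro Hp.
  set (e := Rabs (D - l) / 2).
  assert (He0 : 0 < e) by (unfold e; lra).
  destruct (Hr e He0) as [d1 [Hd1 H1]].
  destruct (Hd e He0) as [d2 H2].
  set (h := Rmin d1 d2 / 2).
  assert (Hm : 0 < Rmin d1 d2) by (apply Rmin_pos; [auto| apply (cond_pos d2)]).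
  assert (Hh0 : 0 < h) by (unfold h; lra).
  assert (Hh1 : h < d1) by (unfold h; assert (H:= Rmin_l d1 d2); lra).
  assert (Hh2 : h < d2) by (unfold h; assert (H:= Rmin_r d1 d2); lra).
  specialize (H1 h (conj Hh0 Hh1)).
  specialize (H2 h ltac:(lra) ltac:(rewrite Rabs_right; lra)).
  rewrite !He in H1 by lra.
  assert (Rabs (D - l) <= Rabs ((Phi (0 + h) - Phi 0) / h - D) + Rabs ((Phi (0 + h) - Phi 0) / h - l)).
  { replace (D - l) with (- ((Phi (0 + h) - Phi 0) / h - D) + ((Phi (0 + h) - Phi 0) / h - l)) by ring.
    eapply Rle_trans; [apply Rabs_triang|]. rewrite Rabs_Ropp. lra. }
  unfold e in *. lra.
Qed.

Lemma sinh_bound u : Rabs u <= / 2 -> Rabs (sinh u - u) <= u ^ 2.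
Proof.
  intro Hu. assert (Hu2 : - / 2 <= u <= / 2) by (unfold Rabs in Hu; destruct (Rcase_abs u); split; lra). clear Hu.
  assert (H1 := exp_ineq1_le u). assert (H2 := exp_ineq1_le (- u)).
  assert (HPQ : exp u * exp (- u) = 1) by (rewrite <- exp_plus; replace (u + - u) with 0 by ring; apply exp_0).
  assert (HP := exp_pos u). assert (HQ := exp_pos (- u)).
  assert (B1 : exp u <= 1 + u + 2 * u^2).
  { assert (exp u * (1 - u) <= 1) by nra.
    assert ((1 - u) * (1 + u + 2 * u^2) >= 1) by nra. nra. }
  assert (B2 : exp (- u) <= 1 - u + 2 * u^2).
  { assert (exp (- u) * (1 + u) <= 1) by nra.
    assert ((1 + u) * (1 - u + 2 * u^2) >= 1) by nra. nra. }
  unfold sinh. apply Rabs_le. split; nra.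
Qed.

Definition wl m A x := A * exp (m * x).
Definition Uw m w := 4 * m * w / (1 - w^2).
Definition Rw w := 4 * w * (1 + w^2) / (1 - w^2)^2.
Definition Vw m w := 8 * m / (1 - w^2).

Lemma wl_small m A x : Rabs A < 1 -> m * x <= 0 -> Rabs (wl m A x) < 1.
Proof.
  intros HA Hx. unfold wl. rewrite Rabs_mult, (Rabs_right (exp _)) by (left; apply exp_pos).
  assert (exp (m * x) <= 1) by (rewrite <- exp_0; destruct Hx; [left; apply exp_increasing; auto| rewrite H; lra]).
  assert (H0 := Rabs_pos A). assert (H1 := exp_pos (m*x)). nra.
Qed.

Lemma sq_lt1 w : Rabs w < 1 -> 0 < 1 - w^2.
Proof. intro H. unfold Rabs in H. destruct (Rcase_abs w); nra. Qed.

Lemma int_R m A p q : Rabs A < 1 -> (forall x, Rmin p q <= x <= Rmax p q -> m * x <= 0) ->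
  RInt.is_RInt (fun x => m^2 * Rw (wl m A x)) p q (Uw m (wl m A q) - Uw m (wl m A p)).
Proof.
  intros HA Hm.
  apply (is_RInt_derive (fun x => Uw m (wl m A x))).
  - intros x Hx. assert (H := sq_lt1 _ (wl_small m A x HA (Hm x Hx))).
    unfold Uw, Rw, wl in *. auto_derive. nra. field. nra.
  - intros x Hx. assert (H := sq_lt1 _ (wl_small m A x HA (Hm x Hx))).
    apply (ex_derive_continuous (K:=R_AbsRing) (V:=R_NormedModule)). unfold Rw, wl in *. auto_derive. nra.
Qed.

Lemma int_V m A p q : Rabs A < 1 -> (forall x, Rmin p q <= x <= Rmax p q -> m * x <= 0) ->
  RInt.is_RInt (fun x => (Uw m (wl m A x))^2) p q (Vw m (wl m A q) - Vw m (wl m A p)).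
Proof.
  intros HA Hm.
  apply (is_RInt_derive (fun x => Vw m (wl m A x))).
  - intros x Hx. assert (H := sq_lt1 _ (wl_small m A x HA (Hm x Hx))).
    unfold Uw, Vw, wl in *. auto_derive. nra. field. nra.
  - intros x Hx. assert (H := sq_lt1 _ (wl_small m A x HA (Hm x Hx))).
    apply (ex_derive_continuous (K:=R_AbsRing) (V:=R_NormedModule)). unfold Uw, wl in *. auto_derive. nra.
Qed.

Lemma toDefs f a b I : RInt.is_RInt f a b I -> Defs.is_RInt f a b I.
Proof.
  intro H. exists (ex_RInt_Reals_0 f a b (ex_intro _ I H)).
  rewrite <- RInt_Reals. apply is_RInt_unique. auto.
Qed.


Lemma lim_minf_comp (f phi : R -> R) l :
  lim_minf f l -> continuity_pt phi l -> lim_minf (fun x => phi (f x)) (phi l).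
Proof.
  intros Hf Hc eps Heps.
  destruct (Hc eps Heps) as [alp [Halp H]].
  destruct (Hf alp Halp) as [M HM].
  exists M. intros x Hx.
  destruct (Req_dec (f x) l) as [E|E].
  - rewrite E. unfold Rminus. rewrite Rplus_opp_r, Rabs_R0. exact Heps.
  - apply (H (f x)). split. split; [exact I| auto]. apply HM; auto.
Qed.

Lemma lim_wl_minf m A : 0 < m -> lim_minf (fun a => wl m A a) 0.
Proof.
  intros Hm eps Heps. set (c := eps / (Rabs A + 1)).
  assert (Hc : 0 < c) by (unfold c; apply Rdiv_lt_0_compat; [auto| assert (H:=Rabs_pos A); lra]).
  exists (ln c / m). intros x Hx. rewrite Rminus_0_r. unfold wl.
  rewrite Rabs_mult, (Rabs_right (exp _)) by (left; apply exp_pos).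
  assert (H1 : m * x < ln c).
  { apply Rmult_lt_compat_l with (r := m) in Hx; auto. replace (m * (ln c / m)) with (ln c) in Hx by (field; lra). auto. }
  assert (H2 : exp (m * x) < c) by (rewrite <- (exp_ln c) by auto; apply exp_increasing; auto).
  assert (H3 := Rabs_pos A). assert (H4 := exp_pos (m * x)).
  assert (H5 : c * (Rabs A + 1) = eps) by (unfold c; field; lra). nra.
Qed.

Lemma lim_wl_pinf m A : m < 0 -> lim_pinf (fun a => wl m A a) 0.
Proof.
  intros Hm eps Heps. set (c := eps / (Rabs A + 1)).
  assert (Hc : 0 < c) by (unfold c; apply Rdiv_lt_0_compat; [auto| assert (H:=Rabs_pos A); lra]).
  exists (ln c / m). intros x Hx. rewrite Rminus_0_r. unfold wl.
  rewrite Rabs_mult, (Rabs_right (exp _)) by (left; apply exp_pos).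
  assert (H1 : m * x < ln c).
  { assert (- m * (ln c / m) < - m * x) by (apply Rmult_lt_compat_l; lra).
    replace (- m * (ln c / m)) with (- ln c) in H by (field; lra). lra. }
  assert (H2 : exp (m * x) < c) by (rewrite <- (exp_ln c) by auto; apply exp_increasing; auto).
  assert (H3 := Rabs_pos A). assert (H4 := exp_pos (m * x)).
  assert (H5 : c * (Rabs A + 1) = eps) by (unfold c; field; lra). nra.
Qed.

Lemma cont_U c d m : continuity_pt (fun w => c * (d - Uw m w)) 0.
Proof.
  apply derivable_continuous_pt. apply ex_derive_Reals_0. unfold Uw. auto_derive. lra.
Qed.

Lemma cont_V c d m : continuity_pt (fun w => c * (d - Vw m w)) 0.
Proof.
  apply derivable_continuous_pt. apply ex_derive_Reals_0. unfold Vw. auto_derive. lra.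
Qed.

Lemma cont_V' c d m : continuity_pt (fun w => c * (Vw m w - d)) 0.
Proof.
  apply derivable_continuous_pt. apply ex_derive_Reals_0. unfold Vw. auto_derive. lra.
Qed.

Lemma sinh_Rw y : sinh y = Rw (wof y).
Proof.
  unfold sinh, Rw, wof.
  assert (HE := exp_pos (y/2)).
  assert (Ef : exp y = exp (y / 2) * exp (y / 2)) by (rewrite <- exp_plus; f_equal; field).
  assert (Emf : exp (- y) = / (exp (y / 2) * exp (y / 2))) by (rewrite <- Ef; apply exp_Ropp).
  rewrite Ef, Emf. set (E := exp (y/2)) in *. field. split; [lra|split; [replace ((E + 1) ^ 2 - (E - 1) ^ 2) with (4 * E) by ring; lra| lra]].
Qed.

Lemma Uw_id m y : m * (exp (y / 2) - / exp (y / 2)) = Uw m (wof y).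
Proof.
  unfold Uw, wof. assert (HE := exp_pos (y/2)). set (E := exp (y/2)) in *.
  field. split; [lra|split; [replace ((E + 1) ^ 2 - (E - 1) ^ 2) with (4 * E) by ring; lra| lra]].
Qed.

Lemma sinh_pos u : 0 < u -> 0 < sinh u.
Proof. intro H. unfold sinh. assert (exp (- u) < exp u) by (apply exp_increasing; lra). lra. Qed.

Lemma sinh_neg u : u < 0 -> sinh u < 0.
Proof. intro H. unfold sinh. assert (exp u < exp (- u)) by (apply exp_increasing; lra). lra. Qed.


Lemma cont_sub (f : R -> R) c x : continuity_pt f x -> continuity_pt (fun y => f y - c) x.
Proof.
  intro H. assert (Hc : constant (fct_cte c)) by (intros u v; reflexivity).
  exact (continuity_pt_minus f (fct_cte c) x H (continuity_pt_const _ x Hc)).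
Qed.

Lemma cont_opp (f : R -> R) x : continuity_pt f (- x) -> continuity_pt (fun y => f (- y)) x.
Proof.
  intro H. apply (continuity_pt_comp (fun y => - y) f x); auto.
  apply derivable_continuous_pt. apply ex_derive_Reals_0. auto_derive. auto.
Qed.

Lemma der_sub (f : R -> R) c x l : derivable_pt_lim f x l -> derivable_pt_lim (fun y => f y - c) x l.
Proof.
  intro H. apply is_derive_Reals. apply is_derive_Reals in H.
  auto_derive. exd. replace (Derive (fun x0 => f x0) x) with l by (symmetry; apply is_derive_unique; auto). ring.
Qed.

Lemma der_opp (f : R -> R) x l : derivable_pt_lim f (- x) l -> derivable_pt_lim (fun y => f (- y)) x (- l).
Proof.
  intro H. apply is_derive_Reals. apply is_derive_Reals in H.
  auto_derive. exd. replace (Derive (fun x0 => f x0) (- x)) with l by (symmetry; apply is_derive_unique; auto). ring.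
Qed.

Lemma der_oppneg (f : R -> R) x l : derivable_pt_lim f (- x) l -> derivable_pt_lim (fun y => - f (- y)) x l.
Proof.
  intro H. apply is_derive_Reals. apply is_derive_Reals in H.
  auto_derive. exd. replace (Derive (fun x0 => f x0) (- x)) with l by (symmetry; apply is_derive_unique; auto). ring.
Qed.

Lemma side k (f g h : R -> R) D : 0 < k ->
  (forall x, 0 < x -> derivable_pt_lim f x (g x)) ->
  (forall x, 0 < x -> derivable_pt_lim g x (h x)) ->
  (forall x, 0 < x -> h x = k^2 * sinh (f x)) ->
  continuity_pt f 0 -> lim_pinf' f 0 -> rderiv f 0 D ->
  (forall x, 0 < x -> wof (f x) = wof (f 0) * exp (- k * x) /\ g x = Uw (- k) (wof (f x))) /\
  D = Uw (- k) (wof (f 0)).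
Proof.
  intros Hk Hf Hg Hh Hc Hl Hr.
  destruct (half_line k f g h Hk Hf Hg Hh Hl) as [A HA].
  assert (HA0 : A = wof (f 0)) by (apply (A_at_0 k A f Hc); intros x Hx; apply HA; auto).
  subst A.
  assert (Hb := wof_bound (f 0)). set (A := wof (f 0)) in *.
  assert (HA1 : 0 < 1 - A) by (unfold Rabs in Hb; destruct (Rcase_abs A); lra).
  assert (HA2 : 0 < 1 + A) by (unfold Rabs in Hb; destruct (Rcase_abs A); lra).
  split.
  - intros x Hx. destruct (HA x Hx) as [H1 H2]. split; auto. rewrite H2. apply Uw_id.
  - apply (rderiv_unique f (fun x => 2 * ln ((1 + A * exp (- k * x)) / (1 - A * exp (- k * x))))).
    + auto.
    + intros x Hx. destruct Hx as [Hx|Hx].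
      * rewrite <- (proj1 (HA x Hx)). apply wof_log.
      * subst x. rewrite Rmult_0_r, exp_0, Rmult_1_r. apply wof_log.
    + apply is_derive_Reals. auto_derive.
      * rewrite Rmult_0_r, exp_0, Rmult_1_r. repeat split; try lra.
        apply Rmult_lt_0_compat; [lra| apply Rinv_0_lt_compat; lra].
      * rewrite Rmult_0_r, exp_0, !Rmult_1_r. unfold Uw. field. split; [|split; lra]. assert (0 < (1 - A) * (1 + A)) by (apply Rmult_lt_0_compat; lra). nra.
Qed.

Lemma sinh_X y : sinh y = (exp (y/2) * exp (y/2) - / (exp (y/2) * exp (y/2))) / 2.
Proof.
  unfold sinh.
  assert (Ef : exp y = exp (y / 2) * exp (y / 2)) by (rewrite <- exp_plus; f_equal; field).
  rewrite <- Ef, <- exp_Ropp. reflexivity.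
Qed.

Lemma sinh_half y : sinh (y / 2) = (exp (y/2) - / exp (y/2)) / 2.
Proof. unfold sinh. rewrite exp_Ropp. reflexivity. Qed.

Lemma int_scal f a b k I: RInt.is_RInt f a b I -> RInt.is_RInt (fun x => k * f x) a b (k * I).
Proof. intro H. exact (is_RInt_scal f a b k I H). Qed.

Lemma Uw_neg m w : Uw (- m) w = - Uw m w.
Proof. unfold Uw. unfold Rdiv. ring. Qed.

Lemma wl0 m A : wl m A 0 = A.
Proof. unfold wl. rewrite Rmult_0_r, exp_0. ring. Qed.

Theorem mainTheorem4 :
  forall eps_i eps_e S_i : R, 0 < eps_i -> 0 < eps_e -> 0 < S_i ->
  exists C delta : R, 0 < delta /\
  forall (l_C phim phip : R) (phit d1 d2 : R -> R),
    0 < l_C ->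
    IsSolution eps_i eps_e S_i l_C phim phip phit d1 d2 ->
    let lp := lam_p eps_e in
    let lm := lam_m eps_i S_i in
    let z := zeta eps_i eps_e S_i in
    let r := rho S_i l_C in
    let Ap := A_p r z in
    let Am := A_m r z in
    let phiD := phim - phip in
    let phiDi := phim - phit 0 in
    let phiDe := phit 0 - phip in
    phiD = ln (l_C / sqrt S_i) /\
    (forall x, 0 < x ->
       phit x = phip + 2 * ln ((1 + Ap * exp (- lp * x)) / (1 - Ap * exp (- lp * x)))) /\
    (forall x, x < 0 ->
       phit x = phim + 2 * ln ((1 + Am * exp (lm * x)) / (1 - Am * exp (lm * x)))) /\
    phiDi = - 2 * ln ((1 + Am) / (1 - Am)) /\
    phiDe = 2 * ln ((1 + Ap) / (1 - Ap)) /\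
    phiDi + phiDe = phiD /\
    ((0 <= phiDi /\ 0 <= phiDe) \/ (phiDi <= 0 /\ phiDe <= 0)) /\
    (Rabs phiD < delta -> Rabs (phiDi - z / (1 + z) * phiD) <= C * phiD ^ 2) /\
    (Rabs phiD < delta -> Rabs (phiDe - 1 / (1 + z) * phiD) <= C * phiD ^ 2) /\
    (exists Lm Lp : R,
       improper_minf_0 (qt S_i phim phip phit) Lm /\
       improper_0_pinf (qt S_i phim phip phit) Lp /\
       Lm = - Lp /\
       (Rabs phiD < delta ->
          Rabs (Lm - / (/ (eps_i * lm) + / (eps_e * lp)) * phiD) <= C * phiD ^ 2)) /\
    (exists E1 E2 : R,
       improper_minf_0 (fun x => epsfun eps_i eps_e x * (d1 x) ^ 2) E1 /\
       improper_0_pinf (fun x => epsfun eps_i eps_e x * (d1 x) ^ 2) E2 /\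
       E1 + E2 = 8 * lp * eps_e * Ap ^ 2 / (1 - Ap ^ 2)
                 + 8 * lm * eps_i * Am ^ 2 / (1 - Am ^ 2)).
Proof.
  intros eps_i eps_e S_i Hei Hee HS.
  assert (Hse := sqrt_lt_R0 _ Hee). assert (Hsi := sqrt_lt_R0 _ Hei).
  assert (HsS := sqrt_lt_R0 _ HS). assert (HsS2 := sqrt_lt_R0 _ HsS).
  assert (Hs2 := sqrt_lt_R0 2 ltac:(lra)).
  assert (Ee := sqrt_sqrt eps_e ltac:(lra)). assert (Ei := sqrt_sqrt eps_i ltac:(lra)).
  assert (ES := sqrt_sqrt S_i ltac:(lra)). assert (ES2 := sqrt_sqrt (sqrt S_i) ltac:(lra)).
  assert (E2 := sqrt_sqrt 2 ltac:(lra)).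
  set (kp := lam_p eps_e). set (km := lam_m eps_i S_i). set (z := zeta eps_i eps_e S_i).
  assert (Hkp : 0 < kp) by (unfold kp, lam_p; apply Rdiv_lt_0_compat; auto).
  assert (Hkm : 0 < km) by (unfold km, lam_m; apply Rmult_lt_0_compat; auto; apply Rdiv_lt_0_compat; auto).
  assert (Hzv : z = sqrt eps_e / (sqrt eps_i * sqrt (sqrt S_i))).
  { unfold z, zeta. apply sqrt_lem_1.
    - apply Rlt_le, Rdiv_lt_0_compat; [auto| apply Rmult_lt_0_compat; auto].
    - apply Rlt_le, Rdiv_lt_0_compat; [auto| apply Rmult_lt_0_compat; auto].
    - set (se := sqrt eps_e) in *. set (si := sqrt eps_i) in *. set (q := sqrt (sqrt S_i)) in *.
      set (sS := sqrt S_i) in *.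
      rewrite <- Ee, <- Ei, <- ES2. field. split; lra. }
  assert (Hz : 0 < z) by (rewrite Hzv; apply Rdiv_lt_0_compat; [auto| apply Rmult_lt_0_compat; auto]).
  assert (Hkp2 : eps_e * kp ^ 2 = 2).
  { unfold kp, lam_p. set (se := sqrt eps_e) in *. rewrite <- Ee. set (s2 := sqrt 2) in *. rewrite <- E2. field. lra. }
  assert (Hkm2 : eps_i * km ^ 2 = 2 * sqrt S_i).
  { unfold km, lam_m. set (si := sqrt eps_i) in *. set (q := sqrt (sqrt S_i)) in *. set (sS := sqrt S_i) in *.
    rewrite <- Ei, <- ES2. set (s2 := sqrt 2) in *. rewrite <- E2. field. lra. }
  assert (Hzk : eps_e * kp = z * (eps_i * km)).
  { rewrite Hzv. unfold kp, km, lam_p, lam_m. set (se := sqrt eps_e) in *. set (si := sqrt eps_i) in *.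
    set (q := sqrt (sqrt S_i)) in *. rewrite <- Ee at 1. rewrite <- Ei at 1. field. split; lra. }
  exists (1 + eps_i * km), 1. split; [lra|].
  intros l_C phim phip phit d1 d2 HlC Hsol. cbv zeta.
  fold kp km z.
  destruct Hsol as [Hcont [Hder [Hode [Hlm [Hlp [[Dm [Dp [HDm [HDp HDD]]]] Hq]]]]]].
  set (fe := fun x => phit x - phip).
  assert (Hfe : forall x, 0 < x -> derivable_pt_lim fe x (d1 x)).
  { intros x Hx. apply der_sub. apply (Hder x ltac:(lra)). }
  assert (Hge : forall x, 0 < x -> derivable_pt_lim d1 x (d2 x)).
  { intros x Hx. apply (Hder x ltac:(lra)). }
  assert (Hhe : forall x, 0 < x -> d2 x = kp ^ 2 * sinh (fe x)).
  { intros x Hx. assert (H := Hode x ltac:(lra)). unfold epsfun, Sfun, phipm in H.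
    destruct (Rlt_dec x 0); [lra|]. rewrite sqrt_1 in H. unfold fe.
    apply Rmult_eq_reg_l with eps_e; [|lra]. rewrite H, <- Rmult_assoc, Hkp2. ring. }
  assert (Hce : continuity_pt fe 0) by (apply cont_sub; auto).
  assert (Hle : lim_pinf' fe 0).
  { intros eps Heps. destruct (Hlp eps Heps) as [M HM]. exists M. intros x Hx.
    unfold fe. rewrite Rminus_0_r. auto. }
  assert (Hre : rderiv fe 0 Dp).
  { intros eps Heps. destruct (HDp eps Heps) as [del [Hdel H]]. exists del. split; auto.
    intros h Hh. unfold fe. replace ((phit (0 + h) - phip - (phit 0 - phip)) / h) with ((phit (0 + h) - phit 0) / h) by (field; lra). auto. }
  destruct (side kp fe d1 d2 Dp Hkp Hfe Hge Hhe Hce Hle Hre) as [He HDpv].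
  set (fi := fun x => phit (- x) - phim).
  set (gi := fun x => - d1 (- x)).
  set (hi := fun x => d2 (- x)).
  assert (Hfi : forall x, 0 < x -> derivable_pt_lim fi x (gi x)).
  { intros x Hx. apply (der_sub (fun y => phit (- y))). apply der_opp. apply (Hder (- x) ltac:(lra)). }
  assert (Hgi : forall x, 0 < x -> derivable_pt_lim gi x (hi x)).
  { intros x Hx. apply der_oppneg. apply (Hder (- x) ltac:(lra)). }
  assert (Hhi : forall x, 0 < x -> hi x = km ^ 2 * sinh (fi x)).
  { intros x Hx. assert (H := Hode (- x) ltac:(lra)). unfold epsfun, Sfun, phipm in H.
    destruct (Rlt_dec (- x) 0); [|lra]. unfold fi, hi.
    apply Rmult_eq_reg_l with eps_i; [|lra]. rewrite H, <- Rmult_assoc, Hkm2. ring. }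
  assert (Hci : continuity_pt fi 0).
  { apply (cont_sub (fun y => phit (- y))). apply cont_opp. auto. }
  assert (Hli : lim_pinf' fi 0).
  { intros eps Heps. destruct (Hlm eps Heps) as [M HM]. exists (- M). intros x Hx.
    unfold fi. rewrite Rminus_0_r. apply HM. lra. }
  assert (Hri : rderiv fi 0 (- Dm)).
  { intros eps Heps. destruct (HDm eps Heps) as [del [Hdel H]]. exists del. split; auto.
    intros h Hh. specialize (H (- h) ltac:(lra)). unfold fi.
    replace ((phit (- (0 + h)) - phim - (phit (- 0) - phim)) / h - - Dm) with (- ((phit (0 + - h) - phit 0) / - h - Dm)).
    - rewrite Rabs_Ropp. auto.
    - replace (- (0 + h)) with (0 + - h) by ring. rewrite Ropp_0. field. lra. }
  destruct (side km fi gi hi (- Dm) Hkm Hfi Hgi Hhi Hci Hli Hri) as [Hi HDmv].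
  assert (Ha : fe 0 = phit 0 - phip) by reflexivity.
  assert (Hb : fi 0 = phit 0 - phim) by (unfold fi; rewrite Ropp_0; reflexivity).
  set (a := fe 0) in *. set (b := fi 0) in *.
  rewrite <- Uw_id in HDpv, HDmv.
  assert (HXp := exp_pos (a / 2)). assert (HYp := exp_pos (b / 2)).
  assert (HwX : wof a = (exp (a/2) - 1) / (exp (a/2) + 1)) by reflexivity.
  assert (HwY : wof b = (exp (b/2) - 1) / (exp (b/2) + 1)) by reflexivity.
  assert (HXX := sinh_X a). assert (HYY := sinh_X b).
  set (X := exp (a / 2)) in *. set (Y := exp (b / 2)) in *.
  assert (HYX : Y - / Y = - z * (X - / X)).
  { apply Rmult_eq_reg_l with (eps_i * km); [|apply Rgt_not_eq; apply Rmult_lt_0_compat; lra].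
    assert (HDm' : Dm = km * (Y - / Y)) by (rewrite <- (Ropp_involutive Dm), HDmv; ring).
    replace (eps_i * km * (Y - / Y)) with (eps_i * Dm) by (rewrite HDm'; ring). rewrite HDD, HDpv.
    replace (eps_i * km * (- z * (X - / X))) with (- (z * (eps_i * km)) * (X - / X)) by ring.
    rewrite <- Hzk. ring. }
  cbv zeta in Hq. rewrite <- Ha, <- Hb, HXX, HYY in Hq.
  assert (Hsq1 : sqrt (4 + (-2 * ((X * X - / (X * X)) / 2)) ^ 2) = X * X + / (X * X)).
  { apply sqrt_lem_1.
    - assert (0 <= (-2 * ((X * X - / (X * X)) / 2)) ^ 2) by apply pow2_ge_0. lra.
    - assert (0 < / (X * X)) by (apply Rinv_0_lt_compat; nra). nra.
    - field. lra. }
  assert (Hsq2 : sqrt (4 * S_i + (-2 * sqrt S_i * ((Y * Y - / (Y * Y)) / 2)) ^ 2) = sqrt S_i * (Y * Y + / (Y * Y))).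
  { apply sqrt_lem_1.
    - assert (0 <= (-2 * sqrt S_i * ((Y * Y - / (Y * Y)) / 2)) ^ 2) by apply pow2_ge_0. lra.
    - assert (0 < / (Y * Y)) by (apply Rinv_0_lt_compat; nra). apply Rmult_le_pos; [lra| assert (0 < Y * Y) by nra; lra].
    - set (sS := sqrt S_i) in *. rewrite <- ES. field. lra. }
  rewrite Hsq1, Hsq2 in Hq.
  assert (HlY : l_C * (Y * Y) = sqrt S_i * (X * X)).
  { apply Rmult_eq_reg_r with (2 / (X * X * (Y * Y))).
    2:{ apply Rgt_not_eq, Rdiv_lt_0_compat; [lra| apply Rmult_lt_0_compat; nra]. }
    transitivity (l_C * (-2 * ((X * X - / (X * X)) / 2) + (X * X + / (X * X)))). { field. lra. }
    rewrite Hq. field. lra. }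
  set (r := rho S_i l_C).
  assert (Hr : 0 < r) by (unfold r, rho; apply sqrt_lt_R0, Rdiv_lt_0_compat; auto).
  assert (Hr2 : r * r = l_C / sqrt S_i) by (unfold r, rho; apply sqrt_sqrt; apply Rlt_le, Rdiv_lt_0_compat; auto).
  assert (HXrY : X = r * Y).
  { assert (HX2 : X * X = (r * Y) * (r * Y)).
    { replace ((r * Y) * (r * Y)) with ((r * r) * (Y * Y)) by ring. rewrite Hr2.
      apply Rmult_eq_reg_l with (sqrt S_i); [|lra]. rewrite <- HlY. field. lra. }
    assert (0 < r * Y) by nra.
    assert (Hm : (X - r * Y) * (X + r * Y) = 0) by (rewrite Rmult_minus_distr_r, !Rmult_plus_distr_l; rewrite HX2; ring).
    destruct (Rmult_integral _ _ Hm); lra. }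
  assert (HY2 : Y * Y * (r * (1 + r * z)) = r + z).
  { assert (H : (Y - / Y) * (r * Y) = (- z * (X - / X)) * (r * Y)) by (rewrite HYX; reflexivity).
    rewrite HXrY in H. field_simplify in H; [| split; lra| lra]. replace (Y * Y * (r * (1 + r * z))) with (Y ^ 2 * r + Y ^ 2 * r ^ 2 * z) by ring. lra. }
  assert (HAm : A_m r z = wof b).
  { assert (Hs1 : 0 < sqrt (r * (1 + r * z))) by (apply sqrt_lt_R0; nra).
    assert (Hs := sqrt_sqrt (r * (1 + r * z)) ltac:(nra)).
    assert (H : sqrt (r + z) = Y * sqrt (r * (1 + r * z))).
    { apply sqrt_lem_1; [lra| nra|]. rewrite <- HY2.
      replace (Y * sqrt (r * (1 + r * z)) * (Y * sqrt (r * (1 + r * z)))) with (Y * Y * (sqrt (r * (1 + r * z)) * sqrt (r * (1 + r * z)))) by ring.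
      rewrite Hs. ring. }
    unfold A_m. rewrite H, HwY. field. split; nra. }
  assert (HAp : A_p r z = wof a).
  { assert (Hs1 : 0 < sqrt (1 + r * z)) by (apply sqrt_lt_R0; nra).
    assert (Hs := sqrt_sqrt (1 + r * z) ltac:(nra)).
    assert (H : sqrt (r * (r + z)) = X * sqrt (1 + r * z)).
    { apply sqrt_lem_1; [nra| nra|].
      replace (X * sqrt (1 + r * z) * (X * sqrt (1 + r * z))) with (X * X * (sqrt (1 + r * z) * sqrt (1 + r * z))) by ring.
      rewrite Hs, HXrY. rewrite <- HY2. ring. }
    unfold A_p. rewrite H, HwX. field. split; nra. }
  rewrite HAp, HAm.
  assert (Hwa := wof_bound a). assert (Hwb := wof_bound b).
  assert (Hla := wof_log a). assert (Hlb := wof_log b).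
  assert (Hst : sinh (b / 2) = - z * sinh (a / 2)).
  { rewrite !sinh_half. fold X Y. rewrite HYX. field. lra. }
  replace (phim - phip) with (a - b) by lra.
  replace (phim - phit 0) with (- b) by lra.
  replace (phit 0 - phip) with a by lra.
  assert (HXa : X * X = exp a) by (unfold X; rewrite <- exp_plus; f_equal; field).
  assert (HYb : Y * Y = exp b) by (unfold Y; rewrite <- exp_plus; f_equal; field).
  assert (Hsgn : (0 <= a /\ b <= 0) \/ (a <= 0 /\ 0 <= b)).
  { destruct (Rle_or_lt 0 a) as [H|H].
    - left. split; auto. destruct (Rle_or_lt b 0) as [H'|H']; auto. exfalso.
      assert (H1 := sinh_pos (b/2) ltac:(lra)).
      destruct H as [H|H].
      + assert (H2 := sinh_pos (a/2) ltac:(lra)). nra.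
      + rewrite <- H in Hst. replace (sinh (0/2)) with 0 in Hst by (unfold sinh; unfold Rdiv; rewrite Rmult_0_l, Ropp_0, Rminus_diag; ring). nra.
    - right. split; [lra|]. destruct (Rle_or_lt 0 b) as [H'|H']; auto. exfalso.
      assert (H1 := sinh_neg (b/2) ltac:(lra)).
      assert (H2 := sinh_neg (a/2) ltac:(lra)). nra. }
  split.
  { replace (l_C / sqrt S_i) with (exp a / exp b).
    - unfold Rdiv. rewrite <- exp_Ropp, <- exp_plus, ln_exp. ring.
    - rewrite <- HXa, <- HYb, <- Hr2, HXrY. field. lra. }
  split.
  { intros x Hx. transitivity (phip + fe x); [unfold fe; ring|].
    rewrite (wof_log (fe x)) at 1. rewrite (proj1 (He x Hx)). reflexivity. }
  split.
  { intros x Hx. transitivity (phim + fi (- x)); [unfold fi; rewrite Ropp_involutive; ring|].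
    rewrite (wof_log (fi (- x))) at 1. rewrite (proj1 (Hi (- x) ltac:(lra))).
    replace (- km * - x) with (km * x) by ring. reflexivity. }
  split; [rewrite Hlb at 1; ring|].
  split; [exact Hla|].
  split; [ring|].
  split; [destruct Hsgn; [left|right]; lra|].
  assert (Asy : Rabs (a - b) < 1 ->
     - (1 + z) * (a/2 - b/2)^2 <= b/2 + z * (a/2) <= (1 + z) * (a/2 - b/2)^2 /\
     - (a/2 - b/2)^2 <= sinh (b/2) - b/2 <= (a/2 - b/2)^2).
  { intro Hd. set (s := a/2) in *. set (t := b/2) in *.
    assert (Hab : a - b = 2 * (s - t)) by (unfold s, t; field).
    rewrite Hab in Hd. rewrite Rabs_mult, (Rabs_right 2) in Hd by lra.
    assert (Hsg : (0 <= s /\ t <= 0) \/ (s <= 0 /\ 0 <= t)) by (unfold s, t; destruct Hsgn; [left|right]; lra).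
    assert (Hs1 : Rabs s <= / 2).
    { unfold Rabs in *. destruct (Rcase_abs s); destruct (Rcase_abs (s - t)); lra. }
    assert (Ht1 : Rabs t <= / 2).
    { unfold Rabs in *. destruct (Rcase_abs t); destruct (Rcase_abs (s - t)); lra. }
    assert (Bs := sinh_bound s Hs1). assert (Bt := sinh_bound t Ht1).
    assert (Bs' : - s^2 <= sinh s - s <= s^2) by (unfold Rabs in Bs; destruct (Rcase_abs (sinh s - s)); split; lra).
    assert (Bt' : - t^2 <= sinh t - t <= t^2) by (unfold Rabs in Bt; destruct (Rcase_abs (sinh t - t)); split; lra).
    assert (Hs2q : s^2 <= (s - t)^2) by (destruct Hsg; nra).
    assert (Ht2q : t^2 <= (s - t)^2) by (destruct Hsg; nra).
    assert (HK : t + z * s = - ((sinh t - t) + z * (sinh s - s))) by (rewrite Hst; ring).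
    split; [|lra].
    rewrite HK. split; nra. }
  split.
  { intro Hd. destruct (Asy Hd) as [[K1 K2] _].
    apply Rabs_le.
    set (e := - b - z / (1 + z) * (a - b)).
    assert (He1 : e * (1 + z) = - 2 * (b/2 + z * (a/2))) by (unfold e; field; lra).
    assert (Hab : (a - b)^2 = 4 * (a/2 - b/2)^2) by field.
    assert (0 <= eps_i * km) by (apply Rmult_le_pos; lra).
    assert (0 <= (a/2 - b/2)^2) by apply pow2_ge_0.
    rewrite Hab. split; nra. }
  split.
  { intro Hd. destruct (Asy Hd) as [[K1 K2] _].
    apply Rabs_le.
    set (e := a - 1 / (1 + z) * (a - b)).
    assert (He1 : e * (1 + z) = 2 * (b/2 + z * (a/2))) by (unfold e; field; lra).
    assert (Hab : (a - b)^2 = 4 * (a/2 - b/2)^2) by field.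
    assert (0 <= eps_i * km) by (apply Rmult_le_pos; lra).
    assert (0 <= (a/2 - b/2)^2) by apply pow2_ge_0.
    rewrite Hab. split; nra. }
  assert (Hint : forall x, x < 0 -> phit x - phim = fi (- x) /\ wof (fi (- x)) = wl km (wof b) x /\
                   d1 x = Uw km (wl km (wof b) x)).
  { intros x Hx. destruct (Hi (- x) ltac:(lra)) as [H1 H2].
    assert (E1 : wof (fi (- x)) = wl km (wof b) x) by (rewrite H1; unfold wl; f_equal; f_equal; ring).
    split; [unfold fi; rewrite Ropp_involutive; reflexivity|]. split; auto.
    unfold gi in H2. rewrite Ropp_involutive in H2. rewrite <- E1.
    rewrite Uw_neg in H2. lra. }
  assert (Hext : forall x, 0 < x -> wof (fe x) = wl (- kp) (wof a) x /\ d1 x = Uw (- kp) (wl (- kp) (wof a) x)).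
  { intros x Hx. destruct (He x Hx) as [H1 H2]. split; auto. rewrite H2, H1. reflexivity. }
  assert (HU0 : forall m, Uw m 0 = 0) by (intro m; unfold Uw; unfold Rdiv; ring).
  assert (Hwb1 : Rabs (wof b) < 1) by apply wof_bound.
  assert (Hwa1 : Rabs (wof a) < 1) by apply wof_bound.
  split.
  { exists (- eps_i * (Uw km (wl km (wof b) 0) - Uw km 0)).
    exists (eps_e * (Uw (- kp) (wl (- kp) (wof a) 0) - Uw (- kp) 0)).
    split; [|split; [|split]].
    - exists (fun a0 => - eps_i * (Uw km (wl km (wof b) 0) - Uw km (wl km (wof b) a0))).
      split.
      + intros a0 Ha0. apply toDefs.
        apply is_RInt_ext with (f := fun x => - eps_i * (km ^ 2 * Rw (wl km (wof b) x))).
        * intros x Hx. rewrite Rmin_left, Rmax_right in Hx by lra.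
          destruct (Hint x ltac:(lra)) as [H1 [H2 _]].
          unfold qt, Sfun, phipm. destruct (Rlt_dec x 0); [|lra].
          rewrite H1, sinh_Rw, H2. replace (-2 * sqrt S_i) with (- (2 * sqrt S_i)) by ring. rewrite <- Hkm2. match goal with |- ?A = ?B => change (@eq R A B) end. ring.
        * apply int_scal. apply int_R; auto.
          intros x Hx. rewrite Rmin_left, Rmax_right in Hx by lra. nra.
      + exact (lim_minf_comp _ (fun w => - eps_i * (Uw km (wl km (wof b) 0) - Uw km w)) 0
                 (lim_wl_minf km (wof b) Hkm) (cont_U _ _ _)).
    - exists (fun b0 => eps_e * (Uw (- kp) (wl (- kp) (wof a) 0) - Uw (- kp) (wl (- kp) (wof a) b0))).
      split.
      + intros b0 Hb0. apply toDefs.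
        replace (eps_e * (Uw (- kp) (wl (- kp) (wof a) 0) - Uw (- kp) (wl (- kp) (wof a) b0)))
          with (- eps_e * (Uw (- kp) (wl (- kp) (wof a) b0) - Uw (- kp) (wl (- kp) (wof a) 0))) by ring.
        apply is_RInt_ext with (f := fun x => - eps_e * ((- kp) ^ 2 * Rw (wl (- kp) (wof a) x))).
        * intros x Hx. rewrite Rmin_left, Rmax_right in Hx by lra.
          destruct (Hext x ltac:(lra)) as [H1 _].
          unfold qt, Sfun, phipm. destruct (Rlt_dec x 0); [lra|].
          rewrite sqrt_1. change (phit x - phip) with (fe x). rewrite sinh_Rw, H1.
          match goal with |- ?A = ?B => change (@eq R A B) end.
          transitivity (- (eps_e * kp ^ 2) * Rw (wl (- kp) (wof a) x)); [ring|]. rewrite Hkp2. ring.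
        * apply int_scal. apply int_R; auto.
          intros x Hx. rewrite Rmin_left, Rmax_right in Hx by lra. nra.
      + exact (lim_pinf_comp _ (fun w => eps_e * (Uw (- kp) (wl (- kp) (wof a) 0) - Uw (- kp) w)) 0
                 (lim_wl_pinf (- kp) (wof a) ltac:(lra)) (cont_U _ _ _)).
    - rewrite !wl0, !HU0, <- !Uw_id. fold X Y. rewrite HYX.
      match goal with |- ?A = ?B => change (@eq R A B) end.
      transitivity (z * (eps_i * km) * (X - / X)); [ring|]. rewrite <- Hzk. ring.
    - intro Hd. destruct (Asy Hd) as [[K1 K2] [S1 S2]].
      rewrite !wl0, !HU0, <- !Uw_id. fold Y.
      replace (Y - / Y) with (2 * sinh (b / 2)) by (rewrite sinh_half; fold Y; field; lra).
      replace (/ (/ (eps_i * km) + / (eps_e * kp))) with (eps_i * km * z / (1 + z))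
        by (rewrite Hzk; field; repeat split; try lra; apply Rgt_not_eq, Rmult_lt_0_compat; lra).
      set (al := eps_i * km) in *.
      assert (Hal : 0 < al) by (unfold al; apply Rmult_lt_0_compat; lra).
      set (Q := (a/2 - b/2)^2) in *.
      assert (HQ : 0 <= Q) by (unfold Q; apply pow2_ge_0).
      set (P := (1 + z) * (sinh (b/2) - b/2) + (b/2 + z * (a/2))).
      assert (P1 : P <= 2 * (1 + z) * Q) by (unfold P; nra).
      assert (P2 : - (2 * (1 + z) * Q) <= P) by (unfold P; nra).
      assert (Hab : (a - b)^2 = 4 * Q) by (unfold Q; field).
      rewrite Hab.
      set (e := - eps_i * (km * (2 * sinh (b / 2)) - 0) - al * z / (1 + z) * (a - b)).
      assert (He1 : e * (1 + z) = - 2 * al * P) by (unfold e, P, al; field; lra).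
      assert (T1 : 0 <= al * (2 * (1 + z) * Q - P)) by (apply Rmult_le_pos; lra).
      assert (T2 : 0 <= al * (P + 2 * (1 + z) * Q)) by (apply Rmult_le_pos; lra).
      apply Rabs_le. split; nra. }
  exists (eps_i * (Vw km (wl km (wof b) 0) - Vw km 0)).
  exists (eps_e * (Vw (- kp) 0 - Vw (- kp) (wl (- kp) (wof a) 0))).
  split; [|split].
  - exists (fun a0 => eps_i * (Vw km (wl km (wof b) 0) - Vw km (wl km (wof b) a0))).
    split.
    + intros a0 Ha0. apply toDefs.
      apply is_RInt_ext with (f := fun x => eps_i * (Uw km (wl km (wof b) x)) ^ 2).
      * intros x Hx. rewrite Rmin_left, Rmax_right in Hx by lra.
        destruct (Hint x ltac:(lra)) as [_ [_ H3]].
        unfold epsfun. destruct (Rlt_dec x 0); [|lra]. rewrite H3. reflexivity.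
      * apply int_scal. apply int_V; auto.
        intros x Hx. rewrite Rmin_left, Rmax_right in Hx by lra. nra.
    + exact (lim_minf_comp _ (fun w => eps_i * (Vw km (wl km (wof b) 0) - Vw km w)) 0
               (lim_wl_minf km (wof b) Hkm) (cont_V _ _ _)).
  - exists (fun b0 => eps_e * (Vw (- kp) (wl (- kp) (wof a) b0) - Vw (- kp) (wl (- kp) (wof a) 0))).
    split.
    + intros b0 Hb0. apply toDefs.
      apply is_RInt_ext with (f := fun x => eps_e * (Uw (- kp) (wl (- kp) (wof a) x)) ^ 2).
      * intros x Hx. rewrite Rmin_left, Rmax_right in Hx by lra.
        destruct (Hext x ltac:(lra)) as [_ H3].
        unfold epsfun. destruct (Rlt_dec x 0); [lra|]. rewrite H3. reflexivity.
      * apply int_scal. apply int_V; auto.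
        intros x Hx. rewrite Rmin_left, Rmax_right in Hx by lra. nra.
    + exact (lim_pinf_comp _ (fun w => eps_e * (Vw (- kp) w - Vw (- kp) (wl (- kp) (wof a) 0))) 0
               (lim_wl_pinf (- kp) (wof a) ltac:(lra)) (cont_V' _ _ _)).
  - rewrite !wl0. unfold Vw.
    assert (Ha1 := sq_lt1 _ Hwa1). assert (Hb1 := sq_lt1 _ Hwb1).
    field. split; lra.
Qed.
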